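(* Let $\alpha\in\mathbb C$, $\alpha\neq0$, and let $|\xi\rangle=\frac{a^\dagger|\alpha\rangle}{\sqrt{1+|\alpha|^2}}$ be the (normalized) photon-added coherent state, so that $\lambda_0=0$. Set $\beta=\alpha/\sqrt2$ and $|\psi^\perp\rangle=(a^\dagger-\beta^* )|\beta\rangle$ (a unit vector orthogonal to $|\beta\rangle$). Take Bob's measurement $\Pi^B_0=\sum_{m\ge0}|2m\rangle\langle2m|$, $\Pi^B_1=\sum_{m\ge0}|2m+1\rangle\langle2m+1|$, and any two-outcome projective measurement $\{\Pi^A_0,\Pi^A_1\}$ for Alice with $\Pi^A_1|\beta\rangle=|\beta\rangle$ and $\Pi^A_0|\psi^\perp\rangle=|\psi^\perp\rangle$. Then $P(0,0|0,0)=P(0,0|1,1)=\frac{1+e^{-|\alpha|^2}}{2(1+|\alpha|^2)}$, $P(1,1|0,1)=P(1,1|1,0)=\frac{1+2|\alpha|^2+e^{-|\alpha|^2}}{2(1+|\alpha|^2)}$, and therefore $\mathcal J=\frac12+\frac{e^{-|\alpha|^2}}{2(1+|\alpha|^2)}>\frac12$.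
   Context: Modes $A$ and $B$ have annihilation operators $a,b$ and Fock states $|n\rangle$; $|\gamma\rangle=e^{-|\gamma|^2/2}\sum_n\frac{\gamma^n}{\sqrt{n!}}|n\rangle$ is a coherent state. For a normalized single-mode state $|\xi\rangle=\sum_n\lambda_n|n\rangle$ with $|\lambda_0|<1$ and input bits $x,y\in\{0,1\}$, the phase-encoded generalized NOON state is $|\Phi_{xy}\rangle=\mathcal N_{xy}^{-1/2}\big((-1)^x|\xi\rangle_A|0\rangle_B+(-1)^y|0\rangle_A|\xi\rangle_B\big)$ with $\mathcal N_{xy}=2(1+(-1)^{x+y}|\lambda_0|^2)$. The lossless 50:50 beam splitter is the unitary $U$ with $U|0,0\rangle=|0,0\rangle$, $Ua^\dagger U^\dagger=(a^\dagger+b^\dagger)/\sqrt2$, $Ub^\dagger U^\dagger=(a^\dagger-b^\dagger)/\sqrt2$; set $|\Phi''_{xy}\rangle=U|\Phi_{xy}\rangle$. For two-outcome projective measurements $\{\Pi^A_0,\Pi^A_1\}$ on mode $A$, $\{\Pi^B_0,\Pi^B_1\}$ on mode $B$, $P(a,b|x,y)=\langle\Phi''_{xy}|\Pi^A_a\otimes\Pi^B_b|\Phi''_{xy}\rangle$ and $\mathcal J=\frac14\big[P(0,0|0,0)+P(0,0|1,1)+P(1,1|0,1)+P(1,1|1,0)\big]$. *)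

(* Defs.v *)
From Stdlib Require Import Reals Lra Arith.
Open Scope R_scope.

Record Cx := mkC { Re : R ; Im : R }.
Definition RtoC (r : R) : Cx := mkC r 0.
Definition C0 : Cx := RtoC 0.
Definition C1 : Cx := RtoC 1.
Definition Cadd (z w : Cx) : Cx := mkC (Re z + Re w) (Im z + Im w).
Definition Copp (z : Cx) : Cx := mkC (- Re z) (- Im z).
Definition Csub (z w : Cx) : Cx := Cadd z (Copp w).
Definition Cmul (z w : Cx) : Cx :=
  mkC (Re z * Re w - Im z * Im w) (Re z * Im w + Im z * Re w).
Definition Cconj (z : Cx) : Cx := mkC (Re z) (- Im z).
Definition Cnorm2 (z : Cx) : R := Re z * Re z + Im z * Im z.
Fixpoint Cpow (z : Cx) (n : nat) : Cx :=
  match n with O => C1 | S k => Cmul z (Cpow z k) end.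
Fixpoint Csum (f : nat -> Cx) (n : nat) : Cx :=
  match n with O => C0 | S k => Cadd (Csum f k) (f k) end.
Fixpoint Rsum (f : nat -> R) (n : nat) : R :=
  match n with O => 0 | S k => Rsum f k + f k end.
Definition Ccv (s : nat -> Cx) (z : Cx) : Prop :=
  Un_cv (fun N => Re (s N)) (Re z) /\ Un_cv (fun N => Im (s N)) (Im z).

Definition vec := nat -> Cx.
Definition l2 (u : vec) : Prop :=
  exists l, Un_cv (fun N => Rsum (fun n => Cnorm2 (u n)) N) l.
Definition inner_is (u v : vec) (z : Cx) : Prop :=
  Ccv (fun N => Csum (fun n => Cmul (Cconj (u n)) (v n)) N) z.

Definition is_projection (P : vec -> vec) : Prop :=
  (forall u, l2 u -> l2 (P u)) /\
  (forall u v, l2 u -> l2 v -> forall n,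
      P (fun i => Cadd (u i) (v i)) n = Cadd (P u n) (P v n)) /\
  (forall c u, l2 u -> forall n, P (fun i => Cmul c (u i)) n = Cmul c (P u n)) /\
  (forall u, l2 u -> forall n, P (P u) n = P u n) /\
  (forall u v z, l2 u -> l2 v -> inner_is (P u) v z -> inner_is u (P v) z).

Definition proj_meas (P0 P1 : vec -> vec) : Prop :=
  is_projection P0 /\ is_projection P1 /\
  (forall u, l2 u -> forall n, Cadd (P0 u n) (P1 u n) = u n).

(* creation operator a^dagger : |n> -> sqrt(n+1) |n+1> *)
Definition adag (u : vec) : vec := fun n =>
  match n with O => C0 | S k => Cmul (RtoC (sqrt (INR n))) (u k) end.

Definition coh (g : Cx) : vec := fun n =>
  Cmul (RtoC (exp (- Cnorm2 g / 2) / sqrt (INR (fact n)))) (Cpow g n).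

Definition xi_pa (al : Cx) : vec := fun n =>
  Cmul (RtoC (/ sqrt (1 + Cnorm2 al))) (adag (coh al) n).

Definition beta (al : Cx) : Cx := Cmul (RtoC (/ sqrt 2)) al.
Definition psiperp (al : Cx) : vec := fun n =>
  Csub (adag (coh (beta al)) n) (Cmul (Cconj (beta al)) (coh (beta al) n)).

Definition parityP (b : bool) (u : vec) : vec := fun n =>
  if Bool.eqb (Nat.odd n) b then u n else C0.

Definition vec2 := nat -> nat -> Cx.
Definition sgnR (x : bool) : R := if x then -1 else 1.
Definition delta0 (n : nat) : Cx := match n with O => C1 | S _ => C0 end.

Definition NOON (xi : vec) (x y : bool) : vec2 := fun m n =>
  let N := 2 * (1 + sgnR (xorb x y) * Cnorm2 (xi O)) in
  Cmul (RtoC (/ sqrt N))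
    (Cadd (Cmul (RtoC (sgnR x)) (Cmul (xi m) (delta0 n)))
          (Cmul (RtoC (sgnR y)) (Cmul (delta0 m) (xi n)))).

Definition Acr (psi : vec2) : vec2 := fun p q =>
  match p with O => C0 | S k => Cmul (RtoC (sqrt (INR p))) (psi k q) end.
Definition Bcr (psi : vec2) : vec2 := fun p q =>
  match q with O => C0 | S k => Cmul (RtoC (sqrt (INR q))) (psi p k) end.
Definition Cplus (psi : vec2) : vec2 := fun p q =>
  Cmul (RtoC (/ sqrt 2)) (Cadd (Acr psi p q) (Bcr psi p q)).
Definition Cminus (psi : vec2) : vec2 := fun p q =>
  Cmul (RtoC (/ sqrt 2)) (Csub (Acr psi p q) (Bcr psi p q)).
Definition vac2 : vec2 := fun p q => Cmul (delta0 p) (delta0 q).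

(* U|m,n> = U (a^dag)^m (b^dag)^n/sqrt(m!n!) |0,0>
          = ((a^dag+b^dag)/sqrt2)^m ((a^dag-b^dag)/sqrt2)^n /sqrt(m!n!) |0,0> *)
Definition Ubasis (m n : nat) : vec2 := fun p q =>
  Cmul (RtoC (/ sqrt (INR (fact m * fact n))))
       (Nat.iter m Cplus (Nat.iter n Cminus vac2) p q).

(* (U psi)(p,q) = sum_{m,n} <p,q|U|m,n> psi(m,n); U conserves total photon
   number, so only the terms with m + n = p + q are nonzero. *)
Definition BS (psi : vec2) : vec2 := fun p q =>
  Csum (fun m => Cmul (Ubasis m (p + q - m)%nat p q) (psi m (p + q - m)%nat))
       (S (p + q)).

(* tensor product of single-mode operators: (X (x) Y) = (X (x) I)(I (x) Y) *)
Definition tensor (X Y : vec -> vec) (psi : vec2) : vec2 := fun p q =>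
  X (fun p' => Y (fun q' => psi p' q') q) p.

(* <psi|M|psi> = z : the double series over N x N (square partial sums)
   converges to z *)
Definition expect_is (psi : vec2) (M : vec2 -> vec2) (z : Cx) : Prop :=
  Ccv (fun N => Csum (fun p => Csum (fun q =>
          Cmul (Cconj (psi p q)) (M psi p q)) N) N) z.

Definition Prob (al : Cx) (P0 P1 : vec -> vec) (a b x y : bool) (z : Cx) : Prop :=
  expect_is (BS (NOON (xi_pa al) x y))
            (tensor (if a then P1 else P0) (parityP b)) z.

Definition J_is (al : Cx) (P0 P1 : vec -> vec) (z : Cx) : Prop :=
  exists z1 z2 z3 z4,
    Prob al P0 P1 false false false false z1 /\
    Prob al P0 P1 false false true true z2 /\
    Prob al P0 P1 true true false true z3 /\
    Prob al P0 P1 true true true false z4 /\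
    z = Cmul (RtoC (/ 4)) (Cadd (Cadd z1 z2) (Cadd z3 z4)).

(* Main.v *)
Require Import Defs.
From Stdlib Require Import Reals Lra Lia Arith FunctionalExtensionality.
Open Scope R_scope.

Lemma Ceq (z w : Cx) : Re z = Re w -> Im z = Im w -> z = w.
Proof. destruct z, w; simpl; intros; subst; reflexivity. Qed.

Ltac Csolve := apply Ceq; simpl; ring.

Lemma Csum_add f g N : Csum (fun n => Cadd (f n) (g n)) N = Cadd (Csum f N) (Csum g N).
Proof. induction N; simpl. Csolve. rewrite IHN. Csolve. Qed.

Lemma Csum_scal c f N : Csum (fun n => Cmul c (f n)) N = Cmul c (Csum f N).
Proof. induction N; simpl. Csolve. rewrite IHN. Csolve. Qed.

Lemma Csum_ext f g N : (forall n, f n = g n) -> Csum f N = Csum g N.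
Proof. intro H; induction N; simpl; auto. rewrite IHN, H; auto. Qed.

Lemma Csum_prod a b M N :
  Csum (fun p => Csum (fun q => Cmul (a p) (b q)) N) M = Cmul (Csum a M) (Csum b N).
Proof. induction M; simpl. Csolve. rewrite IHM, Csum_scal. Csolve. Qed.

Lemma Csum_Re f N : Re (Csum f N) = Rsum (fun n => Re (f n)) N.
Proof. induction N; simpl; auto. rewrite IHN; auto. Qed.
Lemma Csum_Im f N : Im (Csum f N) = Rsum (fun n => Im (f n)) N.
Proof. induction N; simpl; auto. rewrite IHN; auto. Qed.

Lemma Un_cv_ext u v l : (forall n, u n = v n) -> Un_cv u l -> Un_cv v l.
Proof.
  intros H Hu eps he. destruct (Hu eps he) as [N HN]. exists N.
  intros n hn. rewrite <- H. apply HN; auto.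
Qed.

Lemma Un_cv_const c : Un_cv (fun _ => c) c.
Proof. intros eps he. exists 0%nat. intros. unfold Rdist. rewrite Rminus_diag, Rabs_R0. lra. Qed.

Lemma Ccv_ext s t z : (forall N, s N = t N) -> Ccv s z -> Ccv t z.
Proof.
  intros H [H1 H2]; split.
  - apply (Un_cv_ext (fun N => Re (s N))); auto. intro; rewrite H; auto.
  - apply (Un_cv_ext (fun N => Im (s N))); auto. intro; rewrite H; auto.
Qed.

Lemma Ccv_lim s z w : z = w -> Ccv s z -> Ccv s w.
Proof. intros ->; auto. Qed.

Lemma Ccv_add s t a b : Ccv s a -> Ccv t b -> Ccv (fun N => Cadd (s N) (t N)) (Cadd a b).
Proof. intros [H1 H2] [H3 H4]; split; simpl; apply CV_plus; auto. Qed.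

Lemma Ccv_mul s t a b : Ccv s a -> Ccv t b -> Ccv (fun N => Cmul (s N) (t N)) (Cmul a b).
Proof.
  intros [H1 H2] [H3 H4]; split; simpl.
  - apply CV_minus; apply CV_mult; auto.
  - apply CV_plus; apply CV_mult; auto.
Qed.

Lemma Ccv_const c : Ccv (fun _ => c) c.
Proof. split; apply Un_cv_const. Qed.

Lemma Ccv_scal c s a : Ccv s a -> Ccv (fun N => Cmul c (s N)) (Cmul c a).
Proof. intro H. apply Ccv_mul; auto. apply Ccv_const. Qed.

Lemma Rsum_zero N : Rsum (fun _ => 0) N = 0.
Proof. induction N; simpl; auto. rewrite IHN; ring. Qed.

Lemma Ccv_RtoC f l : Un_cv (Rsum f) l ->
  Ccv (fun N => Csum (fun n => RtoC (f n)) N) (RtoC l).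
Proof.
  intro H; split; simpl.
  - apply (Un_cv_ext (Rsum f)); auto. intro; rewrite Csum_Re; auto.
  - apply (Un_cv_ext (fun _ => 0)). intro; rewrite Csum_Im; simpl. rewrite Rsum_zero; auto.
    apply Un_cv_const.
Qed.

Lemma Ccv_sum_lin c1 c2 f g a b :
  Ccv (fun N => Csum f N) a -> Ccv (fun N => Csum g N) b ->
  Ccv (fun N => Csum (fun n => Cadd (Cmul c1 (f n)) (Cmul c2 (g n))) N)
      (Cadd (Cmul c1 a) (Cmul c2 b)).
Proof.
  intros Ha Hb. apply (Ccv_ext (fun N => Cadd (Cmul c1 (Csum f N)) (Cmul c2 (Csum g N)))).
  intro N. rewrite Csum_add, !Csum_scal. auto.
  apply Ccv_add; apply Ccv_scal; auto.
Qed.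

Lemma Ccv_sum_ext f g a : (forall n, f n = g n) ->
  Ccv (fun N => Csum f N) a -> Ccv (fun N => Csum g N) a.
Proof. intros H. apply Ccv_ext. intro; apply Csum_ext; auto. Qed.

Lemma Rsum_ext f g N : (forall n, f n = g n) -> Rsum f N = Rsum g N.
Proof. intro H; induction N; simpl; auto. rewrite IHN, H; auto. Qed.

Lemma Rsum_S f N : Rsum f (S N) = sum_f_R0 f N.
Proof. induction N as [|N IHN]. simpl; ring.
  change (Rsum f (S (S N))) with (Rsum f (S N) + f (S N)). rewrite IHN. reflexivity. Qed.

Lemma Rsum_scal c f N : Rsum (fun n => c * f n) N = c * Rsum f N.
Proof. induction N as [|N IHN]; simpl. ring. rewrite IHN; ring. Qed.
Lemma Rsum_plus f g N : Rsum (fun n => f n + g n) N = Rsum f N + Rsum g N.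
Proof. induction N as [|N IHN]; simpl. ring. rewrite IHN; ring. Qed.

Lemma cv_S u l : Un_cv (fun n => u (S n)) l -> Un_cv u l.
Proof.
  intros H eps he. destruct (H eps he) as [N HN]. exists (S N).
  intros n hn. destruct n. lia. apply HN. lia.
Qed.

Definition T0 (y : R) (n : nat) := y ^ n / INR (fact n).
Definition T1 (y : R) (n : nat) := INR n * y ^ (n - 1) / INR (fact n).
Definition T2 (y : R) (n : nat) := INR n * INR n * y ^ (n - 1) / INR (fact n).

Lemma E0_cv y : Un_cv (Rsum (T0 y)) (exp y).
Proof.
  apply cv_S. unfold exp. destruct (exist_exp y) as [l Hl]. cbn [proj1_sig].
  apply (Un_cv_ext (fun N => sum_f_R0 (fun i => / INR (fact i) * y ^ i) N)).
  intro n. rewrite Rsum_S. apply sum_eq. intros. unfold T0, Rdiv. ring.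
  exact Hl.
Qed.

Lemma E1_sum y N : Rsum (T1 y) (S N) = Rsum (T0 y) N.
Proof.
  induction N. simpl. unfold T1. simpl. unfold Rdiv. ring.
  replace (Rsum (T1 y) (S (S N))) with (Rsum (T1 y) (S N) + T1 y (S N)) by reflexivity.
  rewrite IHN. simpl Rsum at 2. f_equal. unfold T1, T0.
  replace (S N - 1)%nat with N by lia. rewrite fact_simpl, mult_INR.
  field. split; [apply INR_fact_neq_0| apply not_0_INR; lia].
Qed.

Lemma E1_cv y : Un_cv (Rsum (T1 y)) (exp y).
Proof.
  apply cv_S. apply (Un_cv_ext (Rsum (T0 y))). intro; rewrite E1_sum; auto. apply E0_cv.
Qed.

Lemma E2_sum y N : Rsum (T2 y) (S N) = y * Rsum (T1 y) N + Rsum (T0 y) N.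
Proof.
  induction N. simpl. unfold T2. simpl. unfold Rdiv. ring.
  replace (Rsum (T2 y) (S (S N))) with (Rsum (T2 y) (S N) + T2 y (S N)) by reflexivity.
  rewrite IHN. simpl Rsum at 3 4. unfold T2, T1, T0.
  replace (S N - 1)%nat with N by lia. rewrite fact_simpl, mult_INR.
  destruct N.
  - simpl. field.
  - replace (S N - 1)%nat with N by lia. simpl pow.
    rewrite S_INR. field. split; [apply INR_fact_neq_0| rewrite <- S_INR; apply not_0_INR; lia].
Qed.

Lemma E2_cv y : Un_cv (Rsum (T2 y)) ((1 + y) * exp y).
Proof.
  apply cv_S. apply (Un_cv_ext (fun N => y * Rsum (T1 y) N + Rsum (T0 y) N)).
  intro; rewrite E2_sum; auto.
  replace ((1 + y) * exp y) with (y * exp y + exp y) by ring.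
  apply CV_plus. apply CV_mult. apply Un_cv_const. apply E1_cv. apply E0_cv.
Qed.

Ltac Cunf := apply Ceq; cbn [Re Im Cmul Cconj RtoC Cadd Csub Copp C0 Defs.C1 coh adag Cpow].

Lemma Cpow_norm g n : Cmul (Cconj (Cpow g n)) (Cpow g n) = RtoC (Cnorm2 g ^ n).
Proof.
  induction n. Cunf; simpl; ring.
  cbn [Cpow]. revert IHn. destruct (Cpow g n) as [px py]. destruct g as [gx gy]. intro IH.
  assert (H: px*px + py*py = (gx*gx+gy*gy)^n).
  { apply (f_equal Re) in IH. unfold Cnorm2 in IH. cbn in IH. lra. }
  Cunf; unfold Cnorm2; cbn [Re Im]. rewrite <- tech_pow_Rmult. rewrite <- H. ring. ring.
Qed.

Lemma sqrt_INR_pos k : 0 < sqrt (INR (S k)).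
Proof. apply sqrt_lt_R0. apply lt_0_INR; lia. Qed.
Lemma sqrt_fact_pos k : 0 < sqrt (INR (fact k)).
Proof. apply sqrt_lt_R0. apply INR_fact_lt_0. Qed.
Lemma sqrt_INR_sq k : sqrt (INR k) * sqrt (INR k) = INR k.
Proof. apply sqrt_sqrt. apply pos_INR. Qed.
Lemma sqrt_fact_sq k : sqrt (INR (fact k)) * sqrt (INR (fact k)) = INR (fact k).
Proof. apply sqrt_sqrt. apply pos_INR. Qed.
Lemma sqrt_fact_S k : sqrt (INR (fact (S k))) = sqrt (INR (S k)) * sqrt (INR (fact k)).
Proof. rewrite fact_simpl, mult_INR. apply sqrt_mult; apply pos_INR. Qed.
Lemma INR_fact_S k : INR (fact (S k)) = sqrt (INR (S k)) * sqrt (INR (S k)) *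
   (sqrt (INR (fact k)) * sqrt (INR (fact k))).
Proof. rewrite sqrt_INR_sq, sqrt_fact_sq, fact_simpl, mult_INR. auto. Qed.

Ltac prepS k :=
  rewrite ?sqrt_fact_S, ?INR_fact_S;
  replace (S k - 1)%nat with k by lia;
  let t := fresh "t" in let s := fresh "s" in
  let Ht := fresh "Ht" in let Hs := fresh "Hs" in
  pose proof (sqrt_INR_pos k) as Ht; pose proof (sqrt_fact_pos k) as Hs;
  let Ht2 := fresh "Ht2" in let Hs2 := fresh "Hs2" in
  pose proof (sqrt_INR_sq (S k)) as Ht2; pose proof (sqrt_fact_sq k) as Hs2;
  set (t := sqrt (INR (S k))) in *; set (s := sqrt (INR (fact k))) in *;
  clearbody t s; rewrite <- ?Ht2, <- ?Hs2.

Section Basic.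
Variable g : Cx.
Let r := Cnorm2 g.
Let e := exp (- Cnorm2 g / 2).

Lemma I1 n : Cmul (Cconj (coh g n)) (coh g n) = RtoC (e*e*T0 r n).
Proof.
  pose proof (Cpow_norm g n) as H. unfold T0.
  revert H. unfold coh. fold e. destruct (Cpow g n) as [px py]. intro H.
  apply (f_equal Re) in H. cbn in H. fold r in H. rewrite <- H.
  pose proof (sqrt_fact_pos n) as Hs. pose proof (sqrt_fact_sq n) as Hs2.
  set (s := sqrt (INR (fact n))) in *. clearbody s. rewrite <- Hs2.
  Cunf; field; lra.
Qed.

Lemma I2 n : Cmul (Cconj (coh g n)) (adag (coh g) n) = Cmul (Cconj g) (RtoC (e*e*T1 r n)).
Proof.
  unfold T1. destruct n as [|k].
  - Cunf; cbn [INR]; unfold Rdiv; ring.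
  - pose proof (Cpow_norm g k) as H. unfold adag, coh. fold e. cbn [Cpow].
    revert H. destruct (Cpow g k) as [px py]. fold r. intro H.
    apply (f_equal Re) in H. cbn in H.
    prepS k. rewrite <- H. unfold r. destruct g as [gx gy]. unfold Cnorm2. Cunf; field; lra.
Qed.

Lemma I3 n : Cmul (Cconj (adag (coh g) n)) (coh g n) = Cmul g (RtoC (e*e*T1 r n)).
Proof.
  unfold T1. destruct n as [|k].
  - Cunf; cbn [INR]; unfold Rdiv; ring.
  - pose proof (Cpow_norm g k) as H. unfold adag, coh. fold e. cbn [Cpow].
    revert H. destruct (Cpow g k) as [px py]. fold r. intro H.
    apply (f_equal Re) in H. cbn in H.
    prepS k. rewrite <- H. unfold r. destruct g as [gx gy]. unfold Cnorm2. Cunf; field; lra.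
Qed.

Lemma I4 n : Cmul (Cconj (adag (coh g) n)) (adag (coh g) n) = RtoC (e*e*T2 r n).
Proof.
  unfold T2. destruct n as [|k].
  - Cunf; cbn [INR]; unfold Rdiv; ring.
  - pose proof (Cpow_norm g k) as H. unfold adag, coh. fold e.
    revert H. destruct (Cpow g k) as [px py]. fold r. intro H.
    apply (f_equal Re) in H. cbn in H.
    prepS k. rewrite <- H. Cunf; field; lra.
Qed.
End Basic.

Lemma neg_pow y n : (-1)^n * y^n = (-y)^n.
Proof. replace (-y) with (-1*y) by ring. rewrite Rpow_mult_distr. auto. Qed.

Lemma T0_neg y n : (-1)^n * T0 y n = T0 (-y) n.
Proof. unfold T0. rewrite <- neg_pow. unfold Rdiv. ring. Qed.
Lemma T1_neg y n : (-1)^n * T1 y n = - T1 (-y) n.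
Proof.
  unfold T1. destruct n as [|k]. cbn [INR]. unfold Rdiv; ring.
  replace (S k - 1)%nat with k by lia. rewrite <- neg_pow.
  rewrite <- tech_pow_Rmult. unfold Rdiv; ring.
Qed.
Lemma T2_neg y n : (-1)^n * T2 y n = - T2 (-y) n.
Proof.
  unfold T2. destruct n as [|k]. cbn [INR]. unfold Rdiv; ring.
  replace (S k - 1)%nat with k by lia. rewrite <- neg_pow.
  rewrite <- tech_pow_Rmult. unfold Rdiv; ring.
Qed.

Lemma cvR f k l : Un_cv (Rsum f) l ->
  Ccv (fun N => Csum (fun n => RtoC (k * f n)) N) (RtoC (k * l)).
Proof.
  intro H. apply Ccv_RtoC. apply (Un_cv_ext (fun N => k * Rsum f N)).
  intro; rewrite Rsum_scal; auto. apply CV_mult; auto. apply Un_cv_const.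
Qed.

Lemma cvRc c f k l : Un_cv (Rsum f) l ->
  Ccv (fun N => Csum (fun n => Cmul c (RtoC (k * f n))) N) (Cmul c (RtoC (k * l))).
Proof.
  intro H. apply (Ccv_ext (fun N => Cmul c (Csum (fun n => RtoC (k * f n)) N))).
  intro; rewrite Csum_scal; auto. apply Ccv_scal. apply cvR; auto.
Qed.

Lemma cvRneg f k l : Un_cv (Rsum f) l ->
  Ccv (fun N => Csum (fun n => RtoC (k * - f n)) N) (RtoC (k * - l)).
Proof.
  intro H. apply (Ccv_ext (fun N => Csum (fun n => RtoC ((-k) * f n)) N)).
  intro; apply Csum_ext; intro; f_equal; ring.
  replace (k * - l) with (-k * l) by ring. apply cvR; auto.
Qed.

Lemma cvRcneg c f k l : Un_cv (Rsum f) l ->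
  Ccv (fun N => Csum (fun n => Cmul c (RtoC (k * - f n))) N) (Cmul c (RtoC (k * - l))).
Proof.
  intro H. apply (Ccv_ext (fun N => Cmul c (Csum (fun n => RtoC (k * - f n)) N))).
  intro; rewrite Csum_scal; auto. apply Ccv_scal. apply cvRneg; auto.
Qed.

Definition W (n : nat) := RtoC ((-1)^n).

Section Lims.
Variable g : Cx.
Let r := Cnorm2 g.
Let e := exp (- Cnorm2 g / 2).
Let Em := e * e * exp (- r).
Let Co := coh g.
Let Ad := adag (coh g).

Lemma ee_exp : e * e * exp r = 1.
Proof. unfold e, r. rewrite <- !exp_plus. rewrite <- exp_0. f_equal. field. Qed.

Ltac fin := apply Ccv_lim; [try rewrite ee_exp; try fold Em; apply Ceq; cbn; ring|].

Lemma L_CC : Ccv (fun N => Csum (fun n => Cmul (Cconj (Co n)) (Co n)) N) (RtoC 1).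
Proof.
  apply (Ccv_sum_ext (fun n => RtoC (e*e*T0 r n))). intro; symmetry; apply I1.
  rewrite <- ee_exp. apply cvR. apply E0_cv.
Qed.
Lemma L_CA : Ccv (fun N => Csum (fun n => Cmul (Cconj (Co n)) (Ad n)) N) (Cconj g).
Proof.
  apply (Ccv_sum_ext (fun n => Cmul (Cconj g) (RtoC (e*e*T1 r n)))). intro; symmetry; apply I2.
  apply (Ccv_lim _ (Cmul (Cconj g) (RtoC (e*e*exp r)))). rewrite ee_exp. Csolve.
  apply cvRc. apply E1_cv.
Qed.
Lemma L_AC : Ccv (fun N => Csum (fun n => Cmul (Cconj (Ad n)) (Co n)) N) g.
Proof.
  apply (Ccv_sum_ext (fun n => Cmul g (RtoC (e*e*T1 r n)))). intro; symmetry; apply I3.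
  apply (Ccv_lim _ (Cmul g (RtoC (e*e*exp r)))). rewrite ee_exp. Csolve.
  apply cvRc. apply E1_cv.
Qed.
Lemma L_AA : Ccv (fun N => Csum (fun n => Cmul (Cconj (Ad n)) (Ad n)) N) (RtoC (1 + r)).
Proof.
  apply (Ccv_sum_ext (fun n => RtoC (e*e*T2 r n))). intro; symmetry; apply I4.
  apply (Ccv_lim _ (RtoC (e*e*((1+r)*exp r)))).
  replace (e*e*((1+r)*exp r)) with ((1+r)*(e*e*exp r)) by ring. rewrite ee_exp.
  f_equal; ring.
  apply cvR. apply E2_cv.
Qed.

Lemma WC_CC : Ccv (fun N => Csum (fun n => Cmul (W n) (Cmul (Cconj (Co n)) (Co n))) N) (RtoC Em).
Proof.
  apply (Ccv_sum_ext (fun n => RtoC (e*e*T0 (-r) n))).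
  intro; unfold W, Co, Ad; rewrite I1. fold e r. rewrite <- T0_neg. Csolve.
  apply cvR. apply E0_cv.
Qed.
Lemma WC_CA : Ccv (fun N => Csum (fun n => Cmul (W n) (Cmul (Cconj (Co n)) (Ad n))) N)
   (Cmul (Cconj g) (RtoC (-Em))).
Proof.
  apply (Ccv_sum_ext (fun n => Cmul (Cconj g) (RtoC (e*e* - T1 (-r) n)))).
  intro; unfold W, Co, Ad; rewrite I2. fold e r. rewrite <- T1_neg. Csolve.
  apply (Ccv_lim _ (Cmul (Cconj g) (RtoC (e*e* - exp (-r))))). unfold Em. f_equal. f_equal. ring.
  apply cvRcneg. apply E1_cv.
Qed.
Lemma WC_AC : Ccv (fun N => Csum (fun n => Cmul (W n) (Cmul (Cconj (Ad n)) (Co n))) N)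
   (Cmul g (RtoC (-Em))).
Proof.
  apply (Ccv_sum_ext (fun n => Cmul g (RtoC (e*e* - T1 (-r) n)))).
  intro; unfold W, Co, Ad; rewrite I3. fold e r. rewrite <- T1_neg. Csolve.
  apply (Ccv_lim _ (Cmul g (RtoC (e*e* - exp (-r))))). unfold Em. f_equal. f_equal. ring.
  apply cvRcneg. apply E1_cv.
Qed.
Lemma WC_AA : Ccv (fun N => Csum (fun n => Cmul (W n) (Cmul (Cconj (Ad n)) (Ad n))) N)
   (RtoC ((r - 1) * Em)).
Proof.
  apply (Ccv_sum_ext (fun n => RtoC (e*e* - T2 (-r) n))).
  intro; unfold W, Co, Ad; rewrite I4. fold e r. rewrite <- T2_neg. Csolve.
  apply (Ccv_lim _ (RtoC (e*e* - ((1 + - r) * exp (-r))))). unfold Em. f_equal. ring.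
  apply cvRneg. apply E2_cv.
Qed.
End Lims.

Lemma sqrt_fact0 : sqrt (INR (fact 0)) = 1.
Proof. replace (INR (fact 0)) with 1 by reflexivity. exact sqrt_1. Qed.
Lemma sqrt2_pos : 0 < sqrt 2.
Proof. apply sqrt_lt_R0; lra. Qed.

Ltac fintro a :=
  rewrite ?(sqrt_fact_S a), ?(INR_fact_S a);
  let t := fresh "t" in let s := fresh "s" in
  let Ht := fresh "Ht" in let Hs := fresh "Hs" in
  pose proof (sqrt_INR_pos a) as Ht; pose proof (sqrt_fact_pos a) as Hs;
  let Ht2 := fresh "Ht2" in let Hs2 := fresh "Hs2" in
  pose proof (sqrt_INR_sq (S a)) as Ht2; pose proof (sqrt_fact_sq a) as Hs2;
  set (t := sqrt (INR (S a))) in *; set (s := sqrt (INR (fact a))) in *;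
  clearbody t s; rewrite <- ?Ht2, <- ?Hs2.

Lemma iterP n : forall p q, Nat.iter n Cplus vac2 p q =
  if Nat.eqb (p+q) n then RtoC ((/sqrt 2)^n * INR (fact n) /
        (sqrt (INR (fact p)) * sqrt (INR (fact q)))) else C0.
Proof.
  induction n as [|n IH]; intros p q.
  - unfold vac2. destruct p as [|a], q as [|b]; cbn [Nat.iter delta0 Nat.eqb Nat.add].
    + rewrite sqrt_fact0. apply Ceq; simpl; field.
    + apply Ceq; simpl; ring.
    + apply Ceq; simpl; ring.
    + apply Ceq; simpl; ring.
  - rewrite Nat.iter_succ. unfold Cplus at 1, Acr, Bcr.
    pose proof sqrt2_pos as H2.
    destruct p as [|a], q as [|b].
    + cbn [Nat.eqb Nat.add]. Cunf; ring.
    + rewrite IH. replace (0 + S b)%nat with (S b) by lia. replace (0 + b)%nat with b by lia.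
      cbn [Nat.eqb]. destruct (Nat.eqb_spec b n) as [E|E].
      * subst b. rewrite sqrt_fact0. fintro n. cbn [pow]. Cunf; field; lra.
      * Cunf; ring.
    + rewrite IH. replace (S a + 0)%nat with (S a) by lia. replace (a + 0)%nat with a by lia.
      cbn [Nat.eqb]. destruct (Nat.eqb_spec a n) as [E|E].
      * subst a. rewrite sqrt_fact0. fintro n. cbn [pow]. Cunf; field; lra.
      * Cunf; ring.
    + rewrite !IH. destruct (Nat.eqb_spec (S a + S b) (S n)) as [E|E].
      * rewrite (proj2 (Nat.eqb_eq (a + S b) n)) by lia.
        rewrite (proj2 (Nat.eqb_eq (S a + b) n)) by lia.
        rewrite (fact_simpl n), (mult_INR (S n) (fact n)).
        replace (INR (S n)) with (INR (S a) + INR (S b))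
          by (rewrite <- plus_INR; f_equal; lia).
        set (F := INR (fact n)).
        fintro a. fintro b. cbn [pow]. Cunf; field; lra.
      * rewrite (proj2 (Nat.eqb_neq (a + S b) n)) by lia.
        rewrite (proj2 (Nat.eqb_neq (S a + b) n)) by lia. Cunf; ring.
Qed.

Lemma iterM n : forall p q, Nat.iter n Cminus vac2 p q =
  if Nat.eqb (p+q) n then RtoC ((/sqrt 2)^n * INR (fact n) * (-1)^q /
        (sqrt (INR (fact p)) * sqrt (INR (fact q)))) else C0.
Proof.
  induction n as [|n IH]; intros p q.
  - unfold vac2. destruct p as [|a], q as [|b]; cbn [Nat.iter delta0 Nat.eqb Nat.add].
    + rewrite sqrt_fact0. apply Ceq; simpl; field.
    + apply Ceq; simpl; ring.
    + apply Ceq; simpl; ring.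
    + apply Ceq; simpl; ring.
  - rewrite Nat.iter_succ. unfold Cminus at 1, Acr, Bcr.
    pose proof sqrt2_pos as H2.
    destruct p as [|a], q as [|b].
    + cbn [Nat.eqb Nat.add]. Cunf; ring.
    + rewrite IH. replace (0 + S b)%nat with (S b) by lia. replace (0 + b)%nat with b by lia.
      cbn [Nat.eqb]. destruct (Nat.eqb_spec b n) as [E|E].
      * subst b. rewrite sqrt_fact0. fintro n. cbn [pow]. Cunf; field; lra.
      * Cunf; ring.
    + rewrite IH. replace (S a + 0)%nat with (S a) by lia. replace (a + 0)%nat with a by lia.
      cbn [Nat.eqb]. destruct (Nat.eqb_spec a n) as [E|E].
      * subst a. rewrite sqrt_fact0. fintro n. cbn [pow]. Cunf; field; lra.
      * Cunf; ring.
    + rewrite !IH. destruct (Nat.eqb_spec (S a + S b) (S n)) as [E|E].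
      * rewrite (proj2 (Nat.eqb_eq (a + S b) n)) by lia.
        rewrite (proj2 (Nat.eqb_eq (S a + b) n)) by lia.
        rewrite (fact_simpl n), (mult_INR (S n) (fact n)).
        replace (INR (S n)) with (INR (S a) + INR (S b))
          by (rewrite <- plus_INR; f_equal; lia).
        set (F := INR (fact n)).
        fintro a. fintro b. cbn [pow]. Cunf; field; lra.
      * rewrite (proj2 (Nat.eqb_neq (a + S b) n)) by lia.
        rewrite (proj2 (Nat.eqb_neq (S a + b) n)) by lia. Cunf; ring.
Qed.

Lemma NOON_eq xi x y m k : xi 0%nat = C0 -> NOON xi x y m k =
  Cmul (RtoC (/sqrt 2)) (Cadd (Cmul (RtoC (sgnR x)) (Cmul (xi m) (delta0 k)))
                             (Cmul (RtoC (sgnR y)) (Cmul (delta0 m) (xi k)))).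
Proof.
  intro H. unfold NOON. cbv zeta. rewrite H.
  replace (2 * (1 + sgnR (xorb x y) * Cnorm2 C0)) with 2 by (unfold Cnorm2; simpl; ring).
  reflexivity.
Qed.

Lemma Csum_first f k : (forall m, (0 < m <= k)%nat -> f m = C0) -> Csum f (S k) = Cadd C0 (f 0%nat).
Proof.
  induction k; intro H. reflexivity.
  change (Csum f (S (S k))) with (Cadd (Csum f (S k)) (f (S k))).
  rewrite IHk. rewrite (H (S k)) by lia. Csolve. intros; apply H; lia.
Qed.

Lemma BS_closed xi x y p q : xi 0%nat = C0 -> BS (NOON xi x y) p q =
  Cmul (RtoC (/sqrt 2)) (Cmul (xi (p+q)%nat)
    (Cadd (Cmul (RtoC (sgnR x)) (Ubasis (p+q) 0 p q))
          (Cmul (RtoC (sgnR y)) (Ubasis 0 (p+q) p q)))).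
Proof.
  intro H. unfold BS. remember (p+q)%nat as n. destruct n as [|k].
  - cbn [Csum Nat.sub]. rewrite NOON_eq, H by auto. cbn [delta0]. Cunf; ring.
  - change (Csum ?f (S (S k))) with (Cadd (Csum f (S k)) (f (S k))).
    rewrite Csum_first.
    + rewrite !NOON_eq by auto. rewrite Nat.sub_diag. rewrite Nat.sub_0_r. rewrite H.
      cbn [delta0]. Cunf; ring.
    + intros m Hm. rewrite NOON_eq by auto. destruct m as [|m]. lia.
      replace (S k - S m)%nat with (S (k - S m)) by lia. cbn [delta0]. Cunf; ring.
Qed.

Lemma UP_val p q : Ubasis (p+q) 0 p q = RtoC (/ sqrt (INR (fact (p+q) * fact 0)) *
   ((/sqrt 2)^(p+q) * INR (fact (p+q)) / (sqrt (INR (fact p)) * sqrt (INR (fact q))))).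
Proof.
  unfold Ubasis. change (Nat.iter 0 Cminus vac2) with vac2. rewrite iterP, Nat.eqb_refl.
  Csolve.
Qed.

Lemma UM_val p q : Ubasis 0 (p+q) p q = RtoC (/ sqrt (INR (fact 0 * fact (p+q))) *
   ((/sqrt 2)^(p+q) * INR (fact (p+q)) * (-1)^q / (sqrt (INR (fact p)) * sqrt (INR (fact q))))).
Proof.
  unfold Ubasis. change (Nat.iter 0 Cplus ?X) with X. rewrite iterM, Nat.eqb_refl.
  Csolve.
Qed.

Lemma Cpow_add g m n : Cpow g (m + n) = Cmul (Cpow g m) (Cpow g n).
Proof. induction m; simpl. Csolve. rewrite IHm. Csolve. Qed.

Lemma Cpow_scal c z n : Cpow (Cmul (RtoC c) z) n = Cmul (RtoC (c ^ n)) (Cpow z n).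
Proof. induction n; simpl. Csolve. rewrite IHn. Csolve. Qed.

Lemma AdCo g p q :
  Cadd (Cmul (adag (coh g) p) (coh g q)) (Cmul (coh g p) (adag (coh g) q)) =
  Cmul (RtoC (exp (- Cnorm2 g / 2) * exp (- Cnorm2 g / 2) * INR (p+q) /
              (sqrt (INR (fact p)) * sqrt (INR (fact q))))) (Cpow g (p+q-1)).
Proof.
  set (e := exp (- Cnorm2 g / 2)).
  destruct p as [|a], q as [|b].
  - cbn [adag]. cbn [Nat.add INR]. Cunf; unfold Rdiv; ring.
  - unfold adag, coh. fold e. replace (0 + S b - 1)%nat with b by lia.
    replace (0 + S b)%nat with (S b) by lia. rewrite sqrt_fact0.
    cbn [Cpow]. generalize (Cpow g b) as Z. intro Z.
    fintro b. Cunf; field; lra.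
  - unfold adag, coh. fold e. replace (S a + 0 - 1)%nat with a by lia.
    replace (S a + 0)%nat with (S a) by lia. rewrite sqrt_fact0.
    cbn [Cpow]. generalize (Cpow g a) as Z. intro Z.
    fintro a. Cunf; field; lra.
  - unfold adag, coh. fold e. replace (S a + S b - 1)%nat with (S a + b)%nat by lia.
    rewrite Cpow_add. cbn [Cpow].
    replace (INR (S a + S b)) with (INR (S a) + INR (S b)) by (rewrite plus_INR; auto).
    generalize (Cpow g a) as Za. generalize (Cpow g b) as Zb. intros Zb Za.
    fintro a. fintro b. Cunf; field; lra.
Qed.

Lemma inv_sqrt2_sq : / sqrt 2 * / sqrt 2 = / 2.
Proof. rewrite <- Rinv_mult, sqrt_sqrt; lra. Qed.

Lemma beta_norm al : Cnorm2 (beta al) = Cnorm2 al / 2.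
Proof.
  unfold beta, Cnorm2. destruct al as [u v]. cbn.
  transitivity ((/sqrt 2 * /sqrt 2) * (u*u+v*v)). ring. rewrite inv_sqrt2_sq. field.
Qed.

Lemma xi0 al : xi_pa al 0%nat = C0.
Proof. unfold xi_pa. cbn [adag]. Cunf; ring. Qed.

Lemma Cnorm2_nonneg z : 0 <= Cnorm2 z.
Proof. unfold Cnorm2. nra. Qed.

Definition cc (al : Cx) := / (2 * sqrt (1 + Cnorm2 al)).
Definition eps (x y : bool) (q : nat) := sgnR x + sgnR y * (-1)^q.

Lemma psi_form al x y p q : BS (NOON (xi_pa al) x y) p q =
  Cmul (RtoC (cc al * eps x y q))
    (Cadd (Cmul (adag (coh (beta al)) p) (coh (beta al) q))
          (Cmul (coh (beta al) p) (adag (coh (beta al)) q))).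
Proof.
  rewrite BS_closed by apply xi0. rewrite UP_val, UM_val, AdCo, beta_norm.
  unfold cc, eps.
  pose proof (sqrt_fact_pos p) as Hp. pose proof (sqrt_fact_pos q) as Hq.
  pose proof (Cnorm2_nonneg al) as HA.
  assert (HsA : 0 < sqrt (1 + Cnorm2 al)) by (apply sqrt_lt_R0; lra).
  pose proof sqrt2_pos as H2.
  remember (p+q)%nat as n. destruct n as [|k].
  - rewrite xi0. cbn [INR]. Cunf; unfold Rdiv; ring.
  - unfold xi_pa, adag, coh. replace (S k - 1)%nat with k by lia.
    unfold beta. rewrite Cpow_scal. generalize (Cpow al k) as Z. intro Z.
    replace (exp (- (Cnorm2 al / 2) / 2) * exp (- (Cnorm2 al / 2) / 2))
      with (exp (- Cnorm2 al / 2)) by (rewrite <- exp_plus; f_equal; field).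
    set (E := exp (- Cnorm2 al / 2)).
    rewrite !mult_INR. replace (INR (fact 0)) with 1 by reflexivity.
    rewrite Rmult_1_r, Rmult_1_l.
    fintro k. cbn [pow].
    set (sp := sqrt (INR (fact p))) in *. set (sq := sqrt (INR (fact q))) in *.
    set (sA := sqrt (1 + Cnorm2 al)) in *.
    assert (H22 : sqrt 2 * sqrt 2 = 2) by (apply sqrt_sqrt; lra).
    set (r2 := sqrt 2) in *. clearbody r2. rewrite <- H22.
    Cunf; field; repeat split; lra.
Qed.

Lemma Ccv_sum_add f g a b : Ccv (fun N => Csum f N) a -> Ccv (fun N => Csum g N) b ->
  Ccv (fun N => Csum (fun n => Cadd (f n) (g n)) N) (Cadd a b).
Proof.
  intros Ha Hb. apply (Ccv_ext (fun N => Cadd (Csum f N) (Csum g N))).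
  intro; rewrite Csum_add; auto. apply Ccv_add; auto.
Qed.
Lemma Ccv_sum_scal c f a : Ccv (fun N => Csum f N) a ->
  Ccv (fun N => Csum (fun n => Cmul c (f n)) N) (Cmul c a).
Proof.
  intros Ha. apply (Ccv_ext (fun N => Cmul c (Csum f N))).
  intro; rewrite Csum_scal; auto. apply Ccv_scal; auto.
Qed.

Lemma Ccv_weighted a b X l1 l2 : Ccv (fun N => Csum X N) l1 ->
  Ccv (fun N => Csum (fun n => Cmul (W n) (X n)) N) l2 ->
  Ccv (fun N => Csum (fun n => Cmul (RtoC (a + b * (-1)^n)) (X n)) N)
      (Cadd (Cmul (RtoC a) l1) (Cmul (RtoC b) l2)).
Proof.
  intros H1 H2.
  apply (Ccv_sum_ext (fun n => Cadd (Cmul (RtoC a) (X n)) (Cmul (RtoC b) (Cmul (W n) (X n))))).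
  intro; unfold W; Csolve.
  apply Ccv_sum_lin; auto.
Qed.

Section G.
Variable g : Cx.
Let r := Cnorm2 g.
Let Em := exp (- Cnorm2 g / 2) * exp (- Cnorm2 g / 2) * exp (- Cnorm2 g).
Let Co := coh g.
Let Ad := adag (coh g).
Definition Pg (n : nat) := Csub (Ad n) (Cmul (Cconj g) (Co n)).
Definition G2 (n : nat) := Cadd (Ad n) (Cmul (Cconj g) (Co n)).

Lemma S_PP : Ccv (fun N => Csum (fun n => Cmul (Cconj (Pg n)) (Pg n)) N) (RtoC 1).
Proof.
  apply (Ccv_sum_ext (fun n =>
    Cadd (Cadd (Cmul (Cconj (Ad n)) (Ad n)) (Cmul (Copp (Cconj g)) (Cmul (Cconj (Ad n)) (Co n))))
         (Cadd (Cmul (Copp g) (Cmul (Cconj (Co n)) (Ad n)))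
               (Cmul (Cmul g (Cconj g)) (Cmul (Cconj (Co n)) (Co n)))))).
  intro; unfold Pg; Csolve.
  eapply Ccv_lim; [|apply Ccv_sum_add; apply Ccv_sum_add;
    try apply Ccv_sum_scal; try apply L_AA; try apply L_AC; try apply L_CA; try apply L_CC].
  fold r. unfold r. destruct g as [u v]. unfold Cnorm2. Csolve.
Qed.

Lemma S_CP : Ccv (fun N => Csum (fun n => Cmul (Cconj (Co n)) (Pg n)) N) C0.
Proof.
  apply (Ccv_sum_ext (fun n =>
    Cadd (Cmul Defs.C1 (Cmul (Cconj (Co n)) (Ad n))) (Cmul (Copp (Cconj g)) (Cmul (Cconj (Co n)) (Co n))))).
  intro; unfold Pg; Csolve.
  eapply Ccv_lim; [|apply Ccv_sum_lin; try apply L_CA; try apply L_CC].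
  destruct g as [u v]. Csolve.
Qed.

Lemma S_PC : Ccv (fun N => Csum (fun n => Cmul (Cconj (Pg n)) (Co n)) N) C0.
Proof.
  apply (Ccv_sum_ext (fun n =>
    Cadd (Cmul Defs.C1 (Cmul (Cconj (Ad n)) (Co n))) (Cmul (Copp g) (Cmul (Cconj (Co n)) (Co n))))).
  intro; unfold Pg; Csolve.
  eapply Ccv_lim; [|apply Ccv_sum_lin; try apply L_AC; try apply L_CC].
  destruct g as [u v]. Csolve.
Qed.

Lemma X11 a b : Ccv (fun N => Csum (fun n => Cmul (RtoC (a + b * (-1)^n)) (Cmul (Cconj (Co n)) (Co n))) N)
   (RtoC (a + b * Em)).
Proof.
  eapply Ccv_lim; [|apply Ccv_weighted; [apply L_CC| apply WC_CC]]. unfold Em. Csolve.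
Qed.

Lemma X22 a b : Ccv (fun N => Csum (fun n => Cmul (RtoC (a + b * (-1)^n)) (Cmul (Cconj (G2 n)) (G2 n))) N)
   (RtoC (a * (1 + 4 * r) - b * Em)).
Proof.
  apply (Ccv_sum_ext (fun n => Cmul (RtoC (a + b * (-1)^n))
    (Cadd (Cadd (Cmul (Cconj (Ad n)) (Ad n)) (Cmul (Cconj g) (Cmul (Cconj (Ad n)) (Co n))))
         (Cadd (Cmul g (Cmul (Cconj (Co n)) (Ad n)))
               (Cmul (Cmul g (Cconj g)) (Cmul (Cconj (Co n)) (Co n))))))).
  intro; unfold G2; Csolve.
  eapply Ccv_lim; [|apply Ccv_weighted].
  3: { apply (Ccv_sum_ext (fun n =>
    (Cadd (Cadd (Cmul (W n) (Cmul (Cconj (Ad n)) (Ad n))) (Cmul (Cconj g) (Cmul (W n) (Cmul (Cconj (Ad n)) (Co n)))))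
         (Cadd (Cmul g (Cmul (W n) (Cmul (Cconj (Co n)) (Ad n))))
               (Cmul (Cmul g (Cconj g)) (Cmul (W n) (Cmul (Cconj (Co n)) (Co n)))))))).
       intro; Csolve.
       apply Ccv_sum_add; apply Ccv_sum_add; try apply Ccv_sum_scal;
         try apply WC_AA; try apply WC_AC; try apply WC_CA; try apply WC_CC. }
  2: { apply Ccv_sum_add; apply Ccv_sum_add; try apply Ccv_sum_scal;
         try apply L_AA; try apply L_AC; try apply L_CA; try apply L_CC. }
  fold Em. fold r. clearbody Em. unfold r. destruct g as [u v]. unfold Cnorm2. Csolve.
Qed.

Lemma X21 a b : exists l, Ccv (fun N => Csum (fun n => Cmul (RtoC (a + b * (-1)^n)) (Cmul (Cconj (G2 n)) (Co n))) N) l.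
Proof.
  eexists. apply (Ccv_sum_ext (fun n => Cmul (RtoC (a + b * (-1)^n))
    (Cadd (Cmul Defs.C1 (Cmul (Cconj (Ad n)) (Co n))) (Cmul g (Cmul (Cconj (Co n)) (Co n)))))).
  intro; unfold G2; Csolve.
  apply Ccv_weighted.
  apply Ccv_sum_lin; try apply L_AC; try apply L_CC.
  apply (Ccv_sum_ext (fun n => Cadd (Cmul Defs.C1 (Cmul (W n) (Cmul (Cconj (Ad n)) (Co n))))
                                    (Cmul g (Cmul (W n) (Cmul (Cconj (Co n)) (Co n)))))).
  intro; Csolve.
  apply Ccv_sum_lin; try apply WC_AC; try apply WC_CC.
Qed.

Lemma X12 a b : exists l, Ccv (fun N => Csum (fun n => Cmul (RtoC (a + b * (-1)^n)) (Cmul (Cconj (Co n)) (G2 n))) N) l.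
Proof.
  eexists. apply (Ccv_sum_ext (fun n => Cmul (RtoC (a + b * (-1)^n))
    (Cadd (Cmul Defs.C1 (Cmul (Cconj (Co n)) (Ad n))) (Cmul (Cconj g) (Cmul (Cconj (Co n)) (Co n)))))).
  intro; unfold G2; Csolve.
  apply Ccv_weighted.
  apply Ccv_sum_lin; try apply L_CA; try apply L_CC.
  apply (Ccv_sum_ext (fun n => Cadd (Cmul Defs.C1 (Cmul (W n) (Cmul (Cconj (Co n)) (Ad n))))
                                    (Cmul (Cconj g) (Cmul (W n) (Cmul (Cconj (Co n)) (Co n)))))).
  intro; Csolve.
  apply Ccv_sum_lin; try apply WC_CA; try apply WC_CC.
Qed.
End G.

Lemma l2_of u z : Ccv (fun N => Csum (fun n => Cmul (Cconj (u n)) (u n)) N) z -> l2 u.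
Proof.
  intros [H _]. exists (Re z). apply (Un_cv_ext (fun N => Re (Csum (fun n => Cmul (Cconj (u n)) (u n)) N))); auto.
  intro N. rewrite Csum_Re. apply Rsum_ext. intro; unfold Cnorm2; simpl; ring.
Qed.

Lemma l2_scal c u : l2 u -> l2 (fun i => Cmul c (u i)).
Proof.
  intros [l H]. exists (Cnorm2 c * l).
  apply (Un_cv_ext (fun N => Cnorm2 c * Rsum (fun n => Cnorm2 (u n)) N)).
  intro N. rewrite <- Rsum_scal. apply Rsum_ext. intro; unfold Cnorm2; simpl; ring.
  apply CV_mult; auto. apply Un_cv_const.
Qed.

Lemma proj_lin P a b u v n : is_projection P -> l2 u -> l2 v ->
  P (fun i => Cadd (Cmul a (u i)) (Cmul b (v i))) n = Cadd (Cmul a (P u n)) (Cmul b (P v n)).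
Proof.
  intros [_ [Hadd [Hsc _]]] Hu Hv.
  transitivity (Cadd (P (fun i => Cmul a (u i)) n) (P (fun i => Cmul b (v i)) n)).
  apply (Hadd (fun i => Cmul a (u i)) (fun i => Cmul b (v i))); apply l2_scal; auto.
  rewrite Hsc, Hsc; auto.
Qed.

Lemma expect_split psi M A B C D la lb lc ld :
  (forall p q, Cmul (Cconj (psi p q)) (M psi p q) = Cadd (Cmul (A p) (B q)) (Cmul (C p) (D q))) ->
  Ccv (fun N => Csum A N) la -> Ccv (fun N => Csum B N) lb ->
  Ccv (fun N => Csum C N) lc -> Ccv (fun N => Csum D N) ld ->
  expect_is psi M (Cadd (Cmul la lb) (Cmul lc ld)).
Proof.
  intros H HA HB HC HD. unfold expect_is.
  apply (Ccv_ext (fun N => Cadd (Cmul (Csum A N) (Csum B N)) (Cmul (Csum C N) (Csum D N)))).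
  - intro N. rewrite <- !Csum_prod. rewrite <- Csum_add. apply Csum_ext. intro p.
    rewrite <- Csum_add. apply Csum_ext. intro q. auto.
  - apply Ccv_add; apply Ccv_mul; auto.
Qed.

Lemma neg1_pow q : (-1)^q = if Nat.odd q then -1 else 1.
Proof.
  induction q. reflexivity.
  rewrite <- tech_pow_Rmult, IHq, Nat.odd_succ, <- Nat.negb_odd.
  destruct (Nat.odd q); simpl; ring.
Qed.

Lemma eps_sq x y q : eps x y q * eps x y q = 2 + 2 * (sgnR x * sgnR y) * (-1)^q.
Proof. unfold eps. rewrite neg1_pow. destruct x, y, (Nat.odd q); simpl; ring. Qed.

Section Main.
Variables (al : Cx) (P0 P1 : vec -> vec).
Hypothesis HPM : proj_meas P0 P1.
Hypothesis HP1 : forall n, P1 (coh (beta al)) n = coh (beta al) n.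
Hypothesis HP0 : forall n, P0 (psiperp al) n = psiperp al n.

Let g := beta al.
Let Co := coh g.
Let Pp := psiperp al.
Let w x y q := cc al * eps x y q.
Let k1 x y q := Cmul (RtoC (w x y q)) (Co q).
Let k2 x y q := Cmul (RtoC (w x y q)) (G2 g q).

Lemma Pp_eq : Pp = Pg g.
Proof. reflexivity. Qed.

Lemma l2_Co : l2 Co.
Proof. eapply l2_of. apply L_CC. Qed.
Lemma l2_Pp : l2 Pp.
Proof. eapply l2_of. rewrite Pp_eq. apply S_PP. Qed.

Lemma P0_Co n : P0 Co n = C0.
Proof.
  destruct HPM as [_ [_ Hs]]. pose proof (Hs Co l2_Co n) as E. unfold Co, g in *. rewrite HP1 in E.
  apply Ceq; [apply (f_equal Re) in E | apply (f_equal Im) in E]; simpl in *; lra.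
Qed.
Lemma P1_Pp n : P1 Pp n = C0.
Proof.
  destruct HPM as [_ [_ Hs]]. pose proof (Hs Pp l2_Pp n) as E. unfold Pp in *. rewrite HP0 in E.
  apply Ceq; [apply (f_equal Re) in E | apply (f_equal Im) in E]; simpl in *; lra.
Qed.

Lemma psi_dec x y p q : BS (NOON (xi_pa al) x y) p q =
  Cadd (Cmul (k1 x y q) (Pp p)) (Cmul (k2 x y q) (Co p)).
Proof. rewrite psi_form. unfold k1, k2, w, Pp, Co, g, G2, psiperp. Csolve. Qed.

Lemma M_val P b x y p q : is_projection P ->
  (forall q, Bool.eqb (Nat.odd q) b = false -> eps x y q = 0) ->
  tensor P (parityP b) (BS (NOON (xi_pa al) x y)) p q =
  Cadd (Cmul (k1 x y q) (P Pp p)) (Cmul (k2 x y q) (P Co p)).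
Proof.
  intros HP Hpar. unfold tensor.
  replace (fun p' => parityP b (fun q' => BS (NOON (xi_pa al) x y) p' q') q)
    with (fun p' => Cadd (Cmul (k1 x y q) (Pp p')) (Cmul (k2 x y q) (Co p'))).
  - apply proj_lin; auto. apply l2_Pp. apply l2_Co.
  - apply functional_extensionality. intro p'. unfold parityP.
    destruct (Bool.eqb (Nat.odd q) b) eqn:E.
    + symmetry; apply psi_dec.
    + unfold k1, k2, w. rewrite (Hpar q E). Csolve.
Qed.

Let sg x y := sgnR x * sgnR y.
Let Em := exp (- Cnorm2 g / 2) * exp (- Cnorm2 g / 2) * exp (- Cnorm2 g).
Let a0 := 2 * (cc al * cc al).

Lemma wsq x y q : RtoC (w x y q * w x y q) = RtoC (a0 + (a0 * sg x y) * (-1)^q).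
Proof.
  f_equal. unfold w, a0, sg.
  replace (cc al * eps x y q * (cc al * eps x y q)) with (cc al * cc al * (eps x y q * eps x y q)) by ring.
  rewrite eps_sq. ring.
Qed.

Lemma Prob_a0 b x y : (forall q, Bool.eqb (Nat.odd q) b = false -> eps x y q = 0) ->
  Prob al P0 P1 false b x y (RtoC (a0 + (a0 * sg x y) * Em)).
Proof.
  intro Hpar. unfold Prob. destruct HPM as [HP0p [HP1p _]].
  destruct (X21 g a0 (a0 * sg x y)) as [l Hl].
  eapply Ccv_lim; [| eapply expect_split with
     (A := fun p => Cmul (Cconj (Pp p)) (Pp p))
     (B := fun q => Cmul (RtoC (w x y q * w x y q)) (Cmul (Cconj (Co q)) (Co q)))
     (C := fun p => Cmul (Cconj (Co p)) (Pp p))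
     (D := fun q => Cmul (RtoC (w x y q * w x y q)) (Cmul (Cconj (G2 g q)) (Co q)))].
  2: { intros p q. rewrite M_val by auto. rewrite psi_dec. rewrite HP0. rewrite P0_Co.
       unfold k1, k2. Csolve. }
  2: { rewrite Pp_eq. apply S_PP. }
  2: { apply (Ccv_sum_ext (fun q => Cmul (RtoC (a0 + (a0 * sg x y) * (-1)^q)) (Cmul (Cconj (Co q)) (Co q)))).
       intro; rewrite wsq; auto. apply X11. }
  2: { rewrite Pp_eq. apply S_CP. }
  2: { 
       apply (Ccv_sum_ext (fun q => Cmul (RtoC (a0 + (a0 * sg x y) * (-1)^q)) (Cmul (Cconj (G2 g q)) (Co q)))).
       intro; rewrite wsq; auto. exact Hl. }
  fold Em. Csolve.
Qed.

Lemma Prob_a1 b x y : (forall q, Bool.eqb (Nat.odd q) b = false -> eps x y q = 0) ->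
  Prob al P0 P1 true b x y (RtoC (a0 * (1 + 4 * Cnorm2 g) - (a0 * sg x y) * Em)).
Proof.
  intro Hpar. unfold Prob. destruct HPM as [HP0p [HP1p _]].
  destruct (X12 g a0 (a0 * sg x y)) as [l Hl].
  eapply Ccv_lim; [| eapply expect_split with
     (A := fun p => Cmul (Cconj (Pp p)) (Co p))
     (B := fun q => Cmul (RtoC (w x y q * w x y q)) (Cmul (Cconj (Co q)) (G2 g q)))
     (C := fun p => Cmul (Cconj (Co p)) (Co p))
     (D := fun q => Cmul (RtoC (w x y q * w x y q)) (Cmul (Cconj (G2 g q)) (G2 g q)))].
  2: { intros p q. rewrite M_val by auto. rewrite psi_dec. rewrite P1_Pp. unfold Co, g. rewrite HP1.
       unfold k1, k2, Co, g. Csolve. }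
  2: { rewrite Pp_eq. apply S_PC. }
  2: { 
       apply (Ccv_sum_ext (fun q => Cmul (RtoC (a0 + (a0 * sg x y) * (-1)^q)) (Cmul (Cconj (Co q)) (G2 g q)))).
       intro; rewrite wsq; auto. exact Hl. }
  2: { apply L_CC. }
  2: { apply (Ccv_sum_ext (fun q => Cmul (RtoC (a0 + (a0 * sg x y) * (-1)^q)) (Cmul (Cconj (G2 g q)) (G2 g q)))).
       intro; rewrite wsq; auto. apply X22. }
  fold Em. Csolve.
Qed.
End Main.

Lemma Em_al al : exp (- Cnorm2 (beta al) / 2) * exp (- Cnorm2 (beta al) / 2) * exp (- Cnorm2 (beta al))
   = exp (- Cnorm2 al).
Proof. rewrite beta_norm. rewrite <- !exp_plus. f_equal. field. Qed.

Lemma cc_sq al : cc al * cc al = / (4 * (1 + Cnorm2 al)).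
Proof.
  unfold cc. pose proof (Cnorm2_nonneg al) as HA0.
  assert (H: sqrt (1 + Cnorm2 al) * sqrt (1 + Cnorm2 al) = 1 + Cnorm2 al) by (apply sqrt_sqrt; lra).
  assert (0 < sqrt (1 + Cnorm2 al)) by (apply sqrt_lt_R0; lra).
  set (s := sqrt (1 + Cnorm2 al)) in *. clearbody s. rewrite <- H. field. lra.
Qed.

Ltac parity := intros q E; unfold eps; rewrite neg1_pow; destruct (Nat.odd q); simpl in *;
  try discriminate; ring.

Theorem mainTheorem4 (al : Cx) (P0 P1 : vec -> vec) :
  al <> C0 ->
  proj_meas P0 P1 ->
  (forall n, P1 (coh (beta al)) n = coh (beta al) n) ->
  (forall n, P0 (psiperp al) n = psiperp al n) ->
  Prob al P0 P1 false false false false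
    (RtoC ((1 + exp (- Cnorm2 al)) / (2 * (1 + Cnorm2 al)))) /\
  Prob al P0 P1 false false true true
    (RtoC ((1 + exp (- Cnorm2 al)) / (2 * (1 + Cnorm2 al)))) /\
  Prob al P0 P1 true true false true
    (RtoC ((1 + 2 * Cnorm2 al + exp (- Cnorm2 al)) / (2 * (1 + Cnorm2 al)))) /\
  Prob al P0 P1 true true true false
    (RtoC ((1 + 2 * Cnorm2 al + exp (- Cnorm2 al)) / (2 * (1 + Cnorm2 al)))) /\
  J_is al P0 P1 (RtoC (1 / 2 + exp (- Cnorm2 al) / (2 * (1 + Cnorm2 al)))) /\
  1 / 2 + exp (- Cnorm2 al) / (2 * (1 + Cnorm2 al)) > 1 / 2.
Proof.
  intros _ HPM HP1 HP0.
  pose proof (Cnorm2_nonneg al) as HA.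
  assert (H1 : Prob al P0 P1 false false false false
    (RtoC ((1 + exp (- Cnorm2 al)) / (2 * (1 + Cnorm2 al))))).
  { unfold Prob. eapply Ccv_lim; [| apply (Prob_a0 al P0 P1 HPM HP1 HP0 false false false); parity].
    f_equal. rewrite Em_al, cc_sq. simpl sgnR. field. lra. }
  assert (H2 : Prob al P0 P1 false false true true
    (RtoC ((1 + exp (- Cnorm2 al)) / (2 * (1 + Cnorm2 al))))).
  { unfold Prob. eapply Ccv_lim; [| apply (Prob_a0 al P0 P1 HPM HP1 HP0 false true true); parity].
    f_equal. rewrite Em_al, cc_sq. simpl sgnR. field. lra. }
  assert (H3 : Prob al P0 P1 true true false true
    (RtoC ((1 + 2 * Cnorm2 al + exp (- Cnorm2 al)) / (2 * (1 + Cnorm2 al))))).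
  { unfold Prob. eapply Ccv_lim; [| apply (Prob_a1 al P0 P1 HPM HP1 HP0 true false true); parity].
    f_equal. rewrite Em_al, cc_sq, beta_norm. simpl sgnR. field. lra. }
  assert (H4 : Prob al P0 P1 true true true false
    (RtoC ((1 + 2 * Cnorm2 al + exp (- Cnorm2 al)) / (2 * (1 + Cnorm2 al))))).
  { unfold Prob. eapply Ccv_lim; [| apply (Prob_a1 al P0 P1 HPM HP1 HP0 true true false); parity].
    f_equal. rewrite Em_al, cc_sq, beta_norm. simpl sgnR. field. lra. }
  split; [exact H1|]. split; [exact H2|]. split; [exact H3|]. split; [exact H4|]. split.
  - unfold J_is. do 4 eexists. split; [exact H1|]. split; [exact H2|]. split; [exact H3|]. split; [exact H4|].
    apply Ceq; cbn. field. lra. ring.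
  - pose proof (exp_pos (- Cnorm2 al)).
    assert (0 < exp (- Cnorm2 al) / (2 * (1 + Cnorm2 al))) by (apply Rdiv_lt_0_compat; lra).
    lra.
Qed.
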